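(* Let $S=\{A,B\}$ with $A\ne B$ and let $s,s':I_m\to S$. If there exists $i\ge 1$ such that $m_A^{(i)}(s)\ne m_A^{(i)}(s')$, then $s$ and $s'$ are not mirrored. (Likewise with $B$ in place of $A$.)
   Context: $\mathscr{T}_m=\{\sigma\in\mathcal{S}_m \mid \exists t:\ \sigma(1)>\cdots>\sigma(t)=1,\ \sigma(t)<\cdots<\sigma(m)\}$, $\mathcal{S}_m$ acting on sequences $s:I_m\to S$ by $\sigma s=s\circ\sigma^{-1}$. Two sequences $s,s'$ are mirrored if for every $\sigma\in\mathscr{T}_m$ there is $\sigma'\in\mathscr{T}_m$ with $\sigma s=\sigma's'$, and for every $\tau'\in\mathscr{T}_m$ there is $\tau\in\mathscr{T}_m$ with $\tau's'=\tau s$. Spectrum sequence: for $s:I_m\to\{A,B\}$, $\Sigma(s)=(n_1,n_2,\ldots,n_{2t})$ is the sequence of run lengths of $s$, read left to right, where odd-indexed entries are lengths of maximal runs of $A$ and even-indexed entries of maximal runs of $B$, alternating; $n_1=0$ if $s(1)=B$, $n_{2t}=0$ if $s(m)=A$, and all other entries are positive. Set $\Sigma(s)(l)=0$ for $l\notin\{1,\ldots,2t\}$. For $i\in\{1,\ldots,2t\}$ define $e_i^{(0)}(s)=\Sigma(s)(i)$ and $e_i^{(j)}(s)=\Sigma(s)(i+j)+\Sigma(s)(i-j)$ for $j\ge1$. Let $m_A^{(1)}(s)=\max\{\Sigma(s)(2k+1)\mid k\ge 0\}$, $I_A^{(1)}(s)=\{2k+1\mid \Sigma(s)(2k+1)=m_A^{(1)}(s)\}$,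 and for $i>1$: $m_A^{(i)}(s)=\max\{e_l^{(i-1)}(s)\mid l\in I_A^{(i-1)}(s)\}$ if $I_A^{(i-1)}(s)\ne\emptyset$ and $0$ otherwise; $I_A^{(i)}(s)=\{l\in I_A^{(i-1)}(s)\mid e_l^{(i-1)}(s)=m_A^{(i)}(s)\text{ and }m_A^{(i)}(s)>0\}$. The quantities $m_B^{(i)}, I_B^{(i)}$ are defined analogously, with $m_B^{(1)}(s)=\max\{\Sigma(s)(2k)\mid k\ge1\}$ and $I_B^{(1)}(s)$ the set of even indices attaining it. *)

(* Defs.v *)
From HB Require Import structures.
From mathcomp Require Import all_boot all_order all_fingroup.
Set Implicit Arguments. Unset Strict Implicit. Unset Printing Implicit Defensive.

Inductive letter := A | B.
Definition letter_eqb (x y : letter) : bool :=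
  match x, y with A, A | B, B => true | _, _ => false end.
Lemma letter_eqP : Equality.axiom letter_eqb.
Proof. by case; case; constructor. Qed.
HB.instance Definition _ := hasDecEq.Build letter letter_eqP.

(* Sequences s : I_m -> S, with I_m = {1..m} rendered 0-based as 'I_m. *)
Definition sequence (m : nat) := 'I_m -> letter.

Definition act (m : nat) (sigma : 'S_m) (s : sequence m) : sequence m :=
  fun i => s ((sigma^-1)%g i).

Definition inT (m : nat) (sigma : 'S_m) : Prop :=
  exists t : 'I_m,
    [/\ nat_of_ord (sigma t) = 0,
        (forall i j : 'I_m, i < j -> j <= t -> sigma j < sigma i)
      & (forall i j : 'I_m, t <= i -> i < j -> sigma i < sigma j)].

Definition mirrored (m : nat) (s s' : sequence m) : Prop :=
  (forall sigma : 'S_m, inT sigma ->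
     exists2 sigma' : 'S_m, inT sigma' & act sigma s =1 act sigma' s') /\
  (forall tau' : 'S_m, inT tau' ->
     exists2 tau : 'S_m, inT tau & act tau' s' =1 act tau s).

Fixpoint runs (l : seq letter) : seq (letter * nat) :=
  match l with
  | [::] => [::]
  | x :: l' =>
      match runs l' with
      | (y, n) :: r => if x == y then (y, n.+1) :: r else (x, 1) :: (y, n) :: r
      | [::] => [:: (x, 1)]
      end
  end.

Definition spectrum_list (l : seq letter) : seq nat :=
  let r := runs l in
  let ns := map snd r in
  let ns1 := if r is (B, _) :: _ then 0 :: ns else ns in
  if l is x :: l' then (if last x l' == A then rcons ns1 0 else ns1) else ns1.

Definition spectrum (m : nat) (s : sequence m) : seq nat :=
  spectrum_list (map s (enum 'I_m)).

(* Sigma(s)(l), 1-indexed, 0 outside {1, ..., 2t}. *)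
Definition sig (m : nat) (s : sequence m) (l : nat) : nat :=
  if l is 0 then 0 else nth 0 (spectrum s) l.-1.

(* e_i^{(j)}(s). Truncated subtraction is harmless: i - j <= 0 gives index 0,
   where Sigma vanishes. *)
Definition e_ (m : nat) (s : sequence m) (i j : nat) : nat :=
  if j is 0 then sig s i else sig s (i + j) + sig s (i - j).

(* Parity selector: odd indices for A, even indices for B. *)
Definition parity_of (X : letter) : bool := if X is A then true else false.

Definition idx (m : nat) (s : sequence m) : seq nat := iota 1 (size (spectrum s)).

Definition m1 (X : letter) (m : nat) (s : sequence m) : nat :=
  \max_(l <- idx s | odd l == parity_of X) sig s l.

Definition I1 (X : letter) (m : nat) (s : sequence m) : seq nat :=
  [seq l <- idx s | (odd l == parity_of X) && (sig s l == m1 X s)].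

(* mI X s k = (m_X^{(k+1)}(s), I_X^{(k+1)}(s)). *)
Fixpoint mI (X : letter) (m : nat) (s : sequence m) (k : nat) : nat * seq nat :=
  match k with
  | 0 => (m1 X s, I1 X s)
  | k'.+1 =>
      let I := (mI X s k').2 in
      let mm := \max_(l <- I) e_ s l k in
      (mm, [seq l <- I | (e_ s l k == mm) && (0 < mm)])
  end.

Definition mX (X : letter) (m : nat) (s : sequence m) (i : nat) : nat := (mI X s i.-1).1.
Definition IX (X : letter) (m : nat) (s : sequence m) (i : nat) : seq nat := (mI X s i.-1).2.

(* Main.v *)
Require Import Defs.
From mathcomp Require Import all_boot all_order all_fingroup zify.
Set Implicit Arguments. Unset Strict Implicit. Unset Printing Implicit Defensive.
Definition base (x : letter) : nat := if x is A then 1 else 2.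
Definition dd (x y : letter) : nat := match x, y with B, A => 2 | _, _ => 0 end.

Fixpoint rl (w : seq letter) : seq nat :=
  match w with
  | [::] => [::]
  | x :: w' => match w' with
               | [::] => [:: base x]
               | y :: _ => base x :: map (addn (dd x y)) (rl w')
               end
  end.

Lemma rl_cons x y w : rl (x :: y :: w) = base x :: map (addn (dd x y)) (rl (y :: w)).
Proof. by []. Qed.
Lemma rl_one x : rl [:: x] = [:: base x].
Proof. by []. Qed.
Arguments rl : simpl never.

Lemma size_rl w : size (rl w) = size w.
Proof.
elim: w => [|x [|y w] IH] //; by rewrite rl_cons /= size_map IH.
Qed.

Lemma nth_rl0 x w : nth 0 (rl (x :: w)) 0 = base x.
Proof. by case: w => [|y w]; rewrite ?rl_one ?rl_cons. Qed.

Lemma nth_rlS w i : i.+1 < size w ->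
  nth 0 (rl w) i.+1 = nth 0 (rl w) i + (nth A w i != nth A w i.+1).
Proof.
elim: w i => [|x [|y w] IH] i Hi //.
rewrite rl_cons.
case: i Hi => [|i] Hi.
  rewrite [nth _ (_ :: _) 1]/= (nth_map 0) ?size_rl // nth_rl0 /=.
  by clear Hi IH; case: x; case: y.
rewrite [nth _ (_ :: _) i.+2]/= (nth_map 0) ?size_rl //.
rewrite [nth _ (_ :: _) i.+1]/= (nth_map 0) ?size_rl; last by rewrite ltnW.
by rewrite IH // addnA.
Qed.

Lemma rl_pos w i : i < size w -> 0 < nth 0 (rl w) i.
Proof.
elim: i => [|i IH] Hi.
  by case: w Hi => [|x w] //= _; rewrite nth_rl0; case: x.
by rewrite nth_rlS // (leq_trans (IH (ltnW Hi))) // leq_addr.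
Qed.

Lemma rl_odd w i : i < size w -> odd (nth 0 (rl w) i) = (nth A w i == A).
Proof.
elim: i => [|i IH] Hi.
  by case: w Hi => [|x w] //= _; rewrite nth_rl0; case: x.
rewrite nth_rlS // oddD IH ?(ltnW Hi) //.
by case: (nth A w i); case: (nth A w i.+1).
Qed.

Lemma runs_cons x w : runs (x :: w) =
  match runs w with
  | (y, n) :: r => if x == y then (y, n.+1) :: r else (x, 1) :: (y, n) :: r
  | [::] => [:: (x, 1)]
  end.
Proof. by []. Qed.
Arguments runs : simpl never.

Lemma runs_head y w : exists n r, runs (y :: w) = (y, n.+1) :: r.
Proof.
elim: w y => [|z w IH] y; first by exists 0, [::]; rewrite runs_cons.
have [n [r Hr]] := IH z.
rewrite runs_cons Hr. case: (y =P z) => [->|_]; first by exists n.+1, r.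
by exists 0, ((z, n.+1) :: r).
Qed.

Definition ns1 (w : seq letter) : seq nat :=
  let r := runs w in
  let ns := map snd r in
  if r is (B, _) :: _ then 0 :: ns else ns.

Lemma nth_rcons0 (s : seq nat) i : nth 0 (rcons s 0) i = nth 0 s i.
Proof.
rewrite nth_rcons; case: ltngtP => // H; rewrite nth_default // ?H //; exact: ltnW.
Qed.

Lemma spectrum_ns1 w i : nth 0 (spectrum_list w) i = nth 0 (ns1 w) i.
Proof.
rewrite /spectrum_list /ns1; case: w => [|x w] //.
by case: ifP => _ //; rewrite nth_rcons0.
Qed.

Lemma count_rl0 w : count (pred1 0) (rl w) = 0.
Proof.
apply/eqP; rewrite -leqn0 leqNgt -has_count; apply/negP => /hasP [a].
move=> /(nthP 0) [i Hi <-] /=; rewrite size_rl in Hi.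
by rewrite (negbTE (lt0n_neq0 (rl_pos Hi))).
Qed.

Lemma runs_nil : runs [::] = [::]. Proof. by []. Qed.

Lemma count_add0 v (l : seq nat) : count (pred1 v) (map (addn 0) l) = count (pred1 v) l.
Proof. by rewrite (eq_map (g := id)) ?map_id // => a; rewrite add0n. Qed.

Lemma count_add2 v (l : seq nat) : count (pred1 v.+2) (map (addn 2) l) = count (pred1 v) l.
Proof. by rewrite count_map; apply: eq_count => a /=; rewrite !add2n. Qed.

Lemma count_add2_small v (l : seq nat) : v < 2 -> count (pred1 v) (map (addn 2) l) = 0.
Proof.
move=> Hv; apply/eqP; rewrite -leqn0 leqNgt -has_count; apply/negP => /hasP [a].
move=> /mapP [b _ ->] /= /eqP Hb; move: Hv; rewrite -Hb; by case: b {Hb}.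
Qed.

Lemma ns1_count w v : 0 < v -> nth 0 (ns1 w) v.-1 = count (pred1 v) (rl w).
Proof.
elim: w v => [|x w IH] v Hv; first by rewrite /ns1 runs_nil nth_nil.
case: w IH => [|y w] IH.
  rewrite /ns1 runs_cons runs_nil rl_one.
  by case: x; case: v Hv => [|[|[|v]]] //= _; rewrite nth_nil.
have [n [r Hr]] := runs_head y w.
have IH' : forall v, 0 < v ->
   nth 0 (if y is B then 0 :: n.+1 :: map snd r else n.+1 :: map snd r) v.-1
   = count (pred1 v) (rl (y :: w)).
  move=> u Hu; rewrite -IH // /ns1 Hr /=; by clear IH; case: y Hr.
rewrite /ns1 runs_cons Hr rl_cons.
case: x; case: y Hr IH IH' => Hr IH IH' /=.
- by rewrite count_add0 -IH' //; case: v Hv => [|[|[|v]]].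
- by rewrite count_add0 -IH' //; case: v Hv => [|[|[|v]]].
- case: v Hv => [|[|[|v]]] // _.
  + by rewrite count_add2_small.
  + by rewrite (count_add2 0) count_rl0.
  + by rewrite count_add2 -(IH' v.+1).
- by rewrite count_add0 -IH' //; case: v Hv => [|[|[|v]]].
Qed.

Lemma spec_count w v : 0 < v ->
  nth 0 (spectrum_list w) v.-1 = count (pred1 v) (rl w).
Proof. by move=> Hv; rewrite spectrum_ns1 ns1_count. Qed.
Section Rho.
Variable m : nat.
Variable s : sequence m.

Definition ws := map s (enum 'I_m).
Definition rho (i : nat) := nth 0 (rl ws) i.
Definition sn (i : nat) := nth A ws i.

Lemma size_ws : size ws = m.
Proof. by rewrite size_map size_enum_ord. Qed.

Lemma snE (i : 'I_m) : sn i = s i.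
Proof. by rewrite /sn /ws (nth_map i) ?size_enum_ord // nth_ord_enum. Qed.

Lemma rhoS i : i.+1 < m -> rho i.+1 = rho i + (sn i != sn i.+1).
Proof. by move=> H; rewrite /rho nth_rlS ?size_ws. Qed.

Lemma rho_pos i : i < m -> 0 < rho i.
Proof. by move=> H; rewrite /rho rl_pos ?size_ws. Qed.

Lemma rho_odd i : i < m -> odd (rho i) = (sn i == A).
Proof. by move=> H; rewrite /rho rl_odd ?size_ws. Qed.

Lemma rho_mono i j : i <= j -> j < m -> rho i <= rho j.
Proof.
move=> Hij; elim: j Hij => [|j IH]; first by rewrite leqn0 => /eqP ->.
rewrite leq_eqVlt => /orP [/eqP -> //| Hij] Hj.
by rewrite rhoS // (leq_trans (IH Hij (ltnW Hj))) ?leq_addr.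
Qed.

Lemma rho_step i : i.+1 < m -> rho i.+1 <= (rho i).+1.
Proof. by move=> H; rewrite rhoS // -[X in _ <= X]addn1 leq_add2l leq_b1. Qed.

Lemma rho_ivt a b v : a <= b -> b < m -> rho a <= v <= rho b ->
  exists2 c, a <= c <= b & rho c = v.
Proof.
move=> Hab; elim: b Hab => [|b IH].
  rewrite leqn0 => /eqP -> _ /andP [H1 H2]; exists 0 => //.
  by apply/eqP; rewrite eqn_leq H1 H2.
rewrite leq_eqVlt => /orP [/eqP <- | Hab] Hb /andP [H1 H2].
  exists a; first by rewrite leqnn.
  by apply/eqP; rewrite eqn_leq H1 H2.
case: (leqP v (rho b)) => Hv.
  have [c Hc Hcv] := IH Hab (ltnW Hb) (introT andP (conj H1 Hv)).
  by exists c => //; move: Hc; lia.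
exists b.+1; first by move: Hab; lia.
have := rho_step Hb; lia.
Qed.

Definition Rset (v : nat) := [set i : 'I_m | rho i == v].

Lemma rl_ws : rl ws = map (fun i : 'I_m => rho i) (enum 'I_m).
Proof.
apply: (@eq_from_nth _ 0); first by rewrite size_map size_rl size_ws size_enum_ord.
move=> i; rewrite size_rl size_ws => Hi.
by rewrite (nth_map (Ordinal Hi)) ?size_enum_ord // nth_enum_ord.
Qed.

Lemma sig_card v : sig s v = #|Rset v|.
Proof.
case: v => [|v].
  rewrite /sig; apply/esym/eqP; rewrite cards_eq0; apply/eqP/setP => i.
  by rewrite !inE; have := rho_pos (ltn_ord i); case: (rho i).
rewrite /sig /spectrum -/ws spec_count // rl_ws count_map.
by rewrite cardE /enum_mem size_filter (eq_filter (a2 := predT)) // filter_predT; apply: eq_count => i; rewrite !inE.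
Qed.

End Rho.
Lemma bigmax_attained (r : seq nat) (P : pred nat) (F : nat -> nat) :
  0 < \max_(i <- r | P i) F i ->
  exists i, [/\ i \in r, P i & F i = \max_(i <- r | P i) F i].
Proof.
elim: r => [|a r IH]; first by rewrite big_nil.
rewrite big_cons; case: ifP => Pa.
  case: (leqP (F a) (\max_(i <- r | P i) F i)) => H.
    move=> /IH [i [H1 H2 H3]]; exists i.
    by rewrite inE H1 orbT.
  by move=> _; exists a; rewrite inE eqxx Pa; split.
move=> /IH [i [H1 H2 H3]]; exists i; by rewrite inE H1 orbT.
Qed.

Section Greedy.
Variables (X : letter) (m : nat) (s : sequence m).

Definition mm j := (mI X s j).1.
Definition II j := (mI X s j).2.
Definition cand l := (l \in idx s) && (odd l == parity_of X).
Definition persist l := forall j, 0 < j -> e_ s l j = 0 -> e_ s l j.+1 = 0.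

Lemma mm0 : mm 0 = \max_(l <- idx s | odd l == parity_of X) sig s l.
Proof. by []. Qed.
Lemma mmS j : mm j.+1 = \max_(l <- II j) e_ s l j.+1.
Proof. by []. Qed.
Lemma II_filter j : II j.+1 = [seq l <- II j | (e_ s l j.+1 == mm j.+1) && (0 < mm j.+1)].
Proof. by []. Qed.
Lemma II0 l : (l \in II 0) = cand l && (sig s l == mm 0).
Proof. by rewrite /II /= /I1 mem_filter /cand; case: (l \in idx s); rewrite ?andbT ?andbF. Qed.
Lemma IIS j l : (l \in II j.+1) = [&& e_ s l j.+1 == mm j.+1, 0 < mm j.+1 & l \in II j].
Proof. by rewrite II_filter mem_filter andbA. Qed.

Lemma II_vals k l : l \in II k -> cand l /\ forall j, j <= k -> e_ s l j = mm j.
Proof.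
elim: k => [|k IH].
  rewrite II0 => /andP [H1 /eqP H2]; split => // j; rewrite leqn0 => /eqP -> //.
rewrite IIS => /and3P [/eqP H1 H2 /IH [H3 H4]]; split => // j.
rewrite leq_eqVlt => /orP [/eqP -> //|]; exact: H4.
Qed.

Lemma cand_le l : cand l -> sig s l <= mm 0.
Proof. by case/andP => H1 H2; rewrite mm0 (leq_bigmax_seq (F := sig s) _ H1 H2). Qed.

Lemma II_le j l : l \in II j -> e_ s l j.+1 <= mm j.+1.
Proof. by move=> H; rewrite mmS (leq_bigmax_seq (F := fun l => e_ s l j.+1) _ H). Qed.

Lemma mm_zero j : mm j.+1 = 0 -> II j.+1 = [::].
Proof.
move=> H; rewrite II_filter H; elim: (II j) => //= a r ->; by rewrite andbF.
Qed.

Lemma gstar l : cand l -> persist l -> forall k,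
  (forall j, j < k -> e_ s l j = mm j) -> e_ s l k <= mm k.
Proof.
move=> Hc Hp.
have H : forall k, (forall j, j <= k -> e_ s l j = mm j) ->
   l \in II k \/ (0 < k /\ e_ s l k = 0).
  elim => [|k IH] Heq.
    by left; rewrite II0 Hc /=; apply/eqP; exact: (Heq 0 (leqnn 0)).
  have [H1|[H1 H2]] := IH (fun j Hj => Heq j (leqW Hj)).
    case: (posnP (mm k.+1)) => Hm.
      by right; split => //; rewrite Heq.
    by left; rewrite IIS Heq // eqxx Hm.
  by right; split => //; apply: Hp.
case => [|k] Heq; first by apply: cand_le.
have [H1|[H1 H2]] := H k (fun j Hj => Heq j Hj).
  exact: II_le.
by rewrite (Hp _ H1 H2).
Qed.

Lemma sig_big v : size (spectrum s) < v -> sig s v = 0.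
Proof. by case: v => // v H; rewrite /sig nth_default. Qed.

Lemma cand_size l : cand l -> 0 < l <= size (spectrum s).
Proof. by case/andP; rewrite /idx mem_iota => /andP [H1 H2] _; move: H1 H2; lia. Qed.

Lemma e_big l j : cand l -> size (spectrum s) < j -> e_ s l j = 0.
Proof.
move=> Hc Hj; case: j Hj => [|j] Hj //=.
have := cand_size Hc => Hl.
have -> : l - j.+1 = 0 by move: Hl Hj; lia.
by rewrite sig_big //; move: Hl Hj; lia.
Qed.

Lemma gss : 0 < mm 0 -> (forall l, cand l -> 0 < sig s l -> persist l) ->
  exists2 l, l \in II 0 & forall j, e_ s l j = mm j.
Proof.
move=> Hm0 Hp.
have P : forall k, exists l, [/\ l \in II 0, (forall j, j <= k -> e_ s l j = mm j) &
   (l \in II k \/ [/\ 0 < k, e_ s l k = 0, mm k = 0 & II k = [::]])].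
  elim => [|k [l [Hl0 Heq Hor]]].
    have := Hm0; rewrite {1}mm0 => /bigmax_attained [l [H1 H2 H3]].
    have Hl : l \in II 0 by rewrite II0 /cand H1 H2 /= H3 mm0.
    exists l; split => //; last by left.
    by move=> j; rewrite leqn0 => /eqP ->; rewrite /= H3 mm0.
  case: Hor => [Hlk | [H1 H2 H3 H4]].
    case: (posnP (mm k.+1)) => Hm.
      have He : e_ s l k.+1 = 0 by apply/eqP; rewrite -leqn0 -Hm II_le.
      exists l; split => //; last by right; split => //; apply: mm_zero.
      move=> j; rewrite leq_eqVlt => /orP [/eqP ->|]; last exact: Heq.
      by rewrite He Hm.
    have := Hm; rewrite {1}mmS => /bigmax_attained [l' [H1 _ H3]].
    exists l'; split.
    - have [Hc H] := II_vals H1; rewrite II0 Hc /=; apply/eqP; exact: (H 0 (leq0n _)).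
    - move=> j; rewrite leq_eqVlt => /orP [/eqP ->|]; first by rewrite mmS H3.
      by have [_ H] := II_vals H1; apply: H.
    - by left; rewrite IIS H1 Hm andbT mmS H3 eqxx.
  have Hc : cand l by have [] := II_vals Hl0.
  have He : e_ s l k.+1 = 0.
    apply: (Hp l Hc) => //; rewrite -/(e_ s l 0) (Heq 0) //; exact: Hm0.
  have Hm : mm k.+1 = 0 by rewrite mmS H4 big_nil.
  exists l; split => //; last by right; split => //; apply: mm_zero.
  move=> j; rewrite leq_eqVlt => /orP [/eqP ->|]; first by rewrite He Hm.
  exact: Heq.
have [l [Hl0 Heq _]] := P (size (spectrum s)).
exists l => // j.
case: (leqP j (size (spectrum s))) => Hj; first exact: Heq.
have [Hc _] := II_vals Hl0.
rewrite e_big //.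
case: j Hj => [|j] Hj //.
rewrite mmS; apply/esym/eqP; rewrite -leqn0; apply/bigmax_leqP_seq => l' Hl' _.
have [Hc' _] := II_vals Hl'.
by rewrite e_big.
Qed.

End Greedy.

Section Rho2.
Variables (m : nat) (s : sequence m).

Lemma sig_posP v : 0 < sig s v -> exists i : 'I_m, rho s i = v.
Proof.
rewrite sig_card card_gt0 => /set0Pn [i]; rewrite inE => /eqP H; by exists i.
Qed.

Lemma sig_pos_of (i : 'I_m) : 0 < sig s (rho s i).
Proof. by rewrite sig_card card_gt0; apply/set0Pn; exists i; rewrite inE. Qed.

Lemma rho_monoI (i j : 'I_m) : i <= j -> rho s i <= rho s j.
Proof. by move=> H; apply: rho_mono. Qed.

Lemma rho_ltI (i j : 'I_m) : rho s i < rho s j -> i < j.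
Proof. by move=> H; rewrite ltnNge; apply/negP => /rho_monoI; rewrite leqNgt H. Qed.

Lemma ivtI (a b : 'I_m) v : a <= b -> rho s a <= v <= rho s b ->
  exists c : 'I_m, [/\ a <= c, c <= b & rho s c = v].
Proof.
move=> Hab Hv; have [c Hc Hcv] := rho_ivt Hab (ltn_ord b) Hv.
have Hcm : c < m by case/andP: Hc => _ H; exact: (leq_ltn_trans H (ltn_ord b)).
by exists (Ordinal Hcm); case/andP: Hc.
Qed.

Lemma persist_of l : 0 < sig s l -> persist s l.
Proof.
move=> Hl j Hj; case: j Hj => [//|j] _ /=.
move=> /eqP; rewrite addn_eq0 => /andP [/eqP H1 /eqP H2].
have [b Hb] := sig_posP Hl.
have G1 : sig s (l + j.+2) = 0.
  case: (posnP (sig s (l + j.+2))) => // /sig_posP [a Ha].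
  have Hba : b <= a by apply: ltnW; apply: rho_ltI; rewrite Ha Hb; lia.
  have Hv : rho s b <= l + j.+1 <= rho s a by rewrite Hb Ha; lia.
  have [c [_ _ Hc]] := ivtI Hba Hv.
  by move: (sig_pos_of c); rewrite Hc H1.
have G2 : sig s (l - j.+2) = 0.
  case: (posnP (sig s (l - j.+2))) => // Hp.
  have Hl2 : 0 < l - j.+2 by case: (l - j.+2) Hp.
  have [a Ha] := sig_posP Hp.
  have Hab : a <= b by apply: ltnW; apply: rho_ltI; rewrite Ha Hb; lia.
  have Hv : rho s a <= l - j.+1 <= rho s b by rewrite Hb Ha; lia.
  have [c [_ _ Hc]] := ivtI Hab Hv.
  by move: (sig_pos_of c); rewrite Hc H2.
by rewrite G1 G2.
Qed.

End Rho2.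

Definition Ssum (p : nat -> nat) j := \sum_(j' < j) p j'.
Definition other (X : letter) := if X is A then B else A.
Definition Yl X j := if odd j then other X else X.
Definition Blocks X m (u : sequence m) (p : nat -> nat) k :=
  forall j, j < k -> Ssum p j + p j <= m /\
     (forall i : 'I_m, Ssum p j <= i < Ssum p j + p j -> u i = Yl X j).

Lemma SsumS p j : Ssum p j.+1 = Ssum p j + p j.
Proof. by rewrite /Ssum big_ord_recr. Qed.

Lemma card_lt_ord m n : n <= m -> #|[set q : 'I_m | q < n]| = n.
Proof.
move=> H; rewrite cardE /enum_mem size_filter -enumT.
have -> : count (mem [set q : 'I_m | q < n]) (enum 'I_m) = count (fun x => x < n) (map val (enum 'I_m)).
  by rewrite count_map; apply: eq_count => q; rewrite !inE.
rewrite val_enum_ord.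
have -> : m = n + (m - n) by rewrite subnKC.
rewrite iotaD count_cat add0n.
rewrite (eq_in_count (a2 := predT)); last by move=> x; rewrite mem_iota add0n => /andP [_ ->].
rewrite count_predT size_iota.
rewrite (eq_in_count (a2 := pred0)); last by move=> x; rewrite mem_iota /= => /andP [H1 _]; rewrite ltnNge H1.
by rewrite count_pred0 addn0.
Qed.

Lemma letter_parity m (s : sequence m) (c1 c2 : 'I_m) :
  rho s c2 = (rho s c1).+1 -> s c1 != s c2.
Proof.
move=> H; rewrite -!snE; apply/negP => /eqP E.
have := rho_odd s (ltn_ord c2); rewrite H /= rho_odd // E.
by case: (sn s c2 == A).
Qed.

Section VPerm.
Variables (m : nat) (sigma : 'S_m) (t : 'I_m).
Hypothesis Ht0 : nat_of_ord (sigma t) = 0.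
Hypothesis Hdec : forall i j : 'I_m, i < j -> j <= t -> sigma j < sigma i.
Hypothesis Hinc : forall i j : 'I_m, t <= i -> i < j -> sigma i < sigma j.

Lemma vconvex (a b c : 'I_m) n : a <= c -> c <= b -> sigma a < n -> sigma b < n -> sigma c < n.
Proof.
move=> Hac Hcb Ha Hb.
case: (leqP c t) => Hct.
  move: Hac; rewrite leq_eqVlt => /orP [/eqP E|Hac].
    by have -> : c = a by apply: val_inj.
  exact: ltn_trans (Hdec Hac Hct) Ha.
move: Hcb; rewrite leq_eqVlt => /orP [/eqP E|Hcb].
  by have -> : c = b by apply: val_inj.
exact: ltn_trans (Hinc (ltnW Hct) Hcb) Hb.
Qed.

Definition Jset n := [set i : 'I_m | sigma i < n].

Lemma card_J n : n <= m -> #|Jset n| = n.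
Proof.
move=> H; have := card_preimset [set q : 'I_m | q < n] (@perm_inj _ sigma).
rewrite card_lt_ord // => E; rewrite -[RHS]E; by apply: eq_card => i; rewrite /Jset !inE.
Qed.

End VPerm.

Lemma act_sigma m (sigma : 'S_m) (s : sequence m) (i : 'I_m) : Defs.act sigma s (sigma i) = s i.
Proof. by rewrite /Defs.act permK. Qed.

Section Upper.
Variables (X : letter) (m : nat) (s : sequence m) (sigma : 'S_m) (t : 'I_m).
Hypothesis Ht0 : nat_of_ord (sigma t) = 0.
Hypothesis Hdec : forall i j : 'I_m, i < j -> j <= t -> sigma j < sigma i.
Hypothesis Hinc : forall i j : 'I_m, t <= i -> i < j -> sigma i < sigma j.
Variables (p : nat -> nat) (k : nat).
Hypothesis HB : Blocks X (Defs.act sigma s) p k.+1.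

Definition phase (i : 'I_m) := (rho s i - (rho s t)) + ((rho s t) - rho s i).
Definition Dset j := [set i : 'I_m | phase i < j].
Definition PH j := [set i : 'I_m | phase i == j].
Definition Nset j := [set i : 'I_m | Ssum p j <= sigma i < Ssum p j + p j].

Lemma letters_block j (i : 'I_m) : j <= k -> Ssum p j <= sigma i < Ssum p j + p j ->
  s i = Yl X j.
Proof. by move=> Hj Hi; rewrite -(act_sigma sigma); apply: (proj2 (HB Hj)). Qed.

Lemma step j (i : 'I_m) : j <= k -> Jset sigma (Ssum p j) = Dset j ->
  Ssum p j <= sigma i < Ssum p j + p j -> phase i = j.
Proof.
move=> Hj HJ Hi.
set S := Ssum p j in HJ Hi *.
have notD : forall c : 'I_m, S <= sigma c -> j <= phase c.
  move=> c Hc; have : c \notin Jset sigma S by rewrite inE -leqNgt.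
  by rewrite HJ inE -leqNgt.
have inN : forall c : 'I_m, j <= phase c -> sigma c < S + p j -> s c = Yl X j.
  move=> c Hc1 Hc2; apply: (letters_block Hj); rewrite Hc2 andbT.
  have : c \notin Dset j by rewrite inE -leqNgt.
  by rewrite -HJ inE -leqNgt.
have HiS := notD i (proj1 (andP Hi)).
have Hi2 : sigma i < S + p j by case/andP: Hi.
have Ht2 : sigma t < S + p j by rewrite Ht0; exact: leq_ltn_trans (leq0n _) Hi2.
have lo : (rho s t) <= rho s i + j.
  rewrite leqNgt; apply/negP => Hlt.
  have Hit : i <= t by apply: ltnW; apply: (rho_ltI (s := s));  lia.
  have Hv1 : rho s i <= (rho s t) - j.+1 <= rho s t by  lia.
  have Hv2 : rho s i <= (rho s t) - j <= rho s t by  lia.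
  have [c1 [H11 H12 H13]] := ivtI Hit Hv1.
  have [c2 [H21 H22 H23]] := ivtI Hit Hv2.
  have P1 : j <= phase c1 by rewrite /phase H13; lia.
  have E1 := inN c1 P1 (vconvex Hdec Hinc H11 H12 Hi2 Ht2).
  have P2 : j <= phase c2 by rewrite /phase H23; lia.
  have E2 := inN c2 P2 (vconvex Hdec Hinc H21 H22 Hi2 Ht2).
  have Hc12 : rho s c2 = (rho s c1).+1 by rewrite H13 H23; lia.
  have := letter_parity Hc12.
  by rewrite E1 E2 eqxx.
have hi : rho s i <= (rho s t) + j.
  rewrite leqNgt; apply/negP => Hlt.
  have Hit : t <= i by apply: ltnW; apply: (rho_ltI (s := s));  lia.
  have Hv1 : rho s t <= (rho s t) + j <= rho s i by  lia.
  have Hv2 : rho s t <= (rho s t) + j.+1 <= rho s i by  lia.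
  have [c1 [H11 H12 H13]] := ivtI Hit Hv1.
  have [c2 [H21 H22 H23]] := ivtI Hit Hv2.
  have P1 : j <= phase c1 by rewrite /phase H13; lia.
  have E1 := inN c1 P1 (vconvex Hdec Hinc H11 H12 Ht2 Hi2).
  have P2 : j <= phase c2 by rewrite /phase H23; lia.
  have E2 := inN c2 P2 (vconvex Hdec Hinc H21 H22 Ht2 Hi2).
  have Hc12 : rho s c2 = (rho s c1).+1 by rewrite H13 H23; lia.
  have := letter_parity Hc12.
  by rewrite E1 E2 eqxx.
by move: HiS lo hi; rewrite /phase; lia.
Qed.


Lemma PH_card j : #|PH j| = e_ s (rho s t) j.
Proof.
case: j => [|j].
  rewrite /= sig_card; apply: eq_card => i; rewrite !inE /phase.
  by apply/eqP/eqP; lia.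
have -> : PH j.+1 = Rset s (rho s t + j.+1) :|: Rset s (rho s t - j.+1).
  apply/setP => i; rewrite !inE /phase; have := rho_pos s (ltn_ord i).
  lia.
rewrite cardsU /= !sig_card.
have -> : Rset s (rho s t + j.+1) :&: Rset s (rho s t - j.+1) = set0.
  apply/setP => i; rewrite !inE; apply/negP => /andP [/eqP -> /eqP]; lia.
by rewrite cards0 subn0.
Qed.

Lemma N_card j : j <= k -> #|Nset j| = p j.
Proof.
move=> Hj; have [HR _] := HB Hj.
have -> : Nset j = Jset sigma (Ssum p j + p j) :\: Jset sigma (Ssum p j).
  by apply/setP => i; rewrite !inE -leqNgt andbC.
rewrite cardsD.
have -> : Jset sigma (Ssum p j + p j) :&: Jset sigma (Ssum p j) = Jset sigma (Ssum p j).
  apply/setIidPr/subsetP => i; rewrite !inE => H; exact: leq_trans H (leq_addr _ _).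
rewrite !card_J //; first by rewrite addKn.
exact: leq_trans (leq_addr _ _) HR.
Qed.

Lemma N_sub j : j <= k -> Jset sigma (Ssum p j) = Dset j -> Nset j \subset PH j.
Proof.
move=> Hj HJ; apply/subsetP => i; rewrite !inE => Hi.
by rewrite (step Hj HJ Hi).
Qed.

Lemma st_X : 0 < p 0 -> s t = X.
Proof.
move=> Hp; have -> : X = Yl X 0 by [].
apply: letters_block => //; by rewrite Ht0 /Ssum big_ord0.
Qed.

Lemma cand_t : 0 < p 0 -> cand X s (rho s t).
Proof.
move=> Hp; rewrite /cand /idx mem_iota.
have H1 := rho_pos s (ltn_ord t).
have H2 : rho s t <= size (spectrum s).
  rewrite leqNgt; apply/negP => H; have := sig_pos_of s t; by rewrite sig_big.
have H3 : odd (rho s t) = (X == A) by rewrite rho_odd // snE st_X.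
apply/andP; split; first by move: H1 H2; lia.
by rewrite H3; case: X.
Qed.

Lemma upper_main : 0 < p 0 -> (forall j, j < k -> p j = mm X s j) -> p k <= mm X s k.
Proof.
move=> Hp0 Heq.
have Hc := cand_t Hp0.
have Hpe := persist_of (sig_pos_of s t).
have Inv : forall j, j <= k -> Jset sigma (Ssum p j) = Dset j /\
    forall j', j' < j -> p j' = e_ s (rho s t) j'.
  elim => [|j IH] Hj.
    split => // ; apply/setP => i; rewrite !inE /Ssum big_ord0; by [].
  have [HJ Hpj] := IH (ltnW Hj).
  have Hle : p j <= e_ s (rho s t) j.
    by rewrite -N_card ?(ltnW Hj) // -PH_card subset_leq_card // N_sub // ltnW.
  have Hge : e_ s (rho s t) j <= p j.
    rewrite Heq //; apply: gstar => // j' Hj'; rewrite -Hpj // Heq //.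
    exact: ltn_trans Hj' Hj.
  have Epj : p j = e_ s (rho s t) j by apply/eqP; rewrite eqn_leq Hle Hge.
  have EN : Nset j = PH j.
    by apply/eqP; rewrite eqEcard N_sub ?(ltnW Hj) //= PH_card N_card ?(ltnW Hj) // Epj.
  split.
    apply/setP => i.
    have := EN; move/setP/(_ i); rewrite !inE SsumS => HN.
    move: (HJ); move/setP/(_ i); rewrite !inE => HD.
    move: HN HD; lia.
  move=> j'; rewrite ltnS leq_eqVlt => /orP [/eqP ->|]; [exact: Epj|exact: Hpj].
have [HJ Hpj] := Inv k (leqnn k).
apply: leq_trans (_ : e_ s (rho s t) k <= _).
  by rewrite -N_card // -PH_card subset_leq_card // N_sub.
apply: gstar => // j' Hj'; rewrite -Hpj //; exact: Heq.
Qed.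

End Upper.

Lemma cand_of X m (s : sequence m) (i : 'I_m) : s i = X -> cand X s (rho s i).
Proof.
move=> Hi; rewrite /cand /idx mem_iota.
have H1 := rho_pos s (ltn_ord i).
have H2 : rho s i <= size (spectrum s).
  rewrite leqNgt; apply/negP => H; have := sig_pos_of s i; by rewrite sig_big.
have H3 : odd (rho s i) = (X == A) by rewrite rho_odd // snE Hi.
apply/andP; split; first by move: H1 H2; lia.
by rewrite H3; case: X {Hi H3}.
Qed.

Lemma noX_letters X m (s : sequence m) : mm X s 0 = 0 -> forall i, s i = other X.
Proof.
move=> H0 i; case E: (s i) => [|]; case: X H0 E => H0 E //.
- have := cand_le (cand_of E); rewrite H0 leqn0 => /eqP H; by move: (sig_pos_of s i); rewrite H.
- have := cand_le (cand_of E); rewrite H0 leqn0 => /eqP H; by move: (sig_pos_of s i); rewrite H.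
Qed.

Lemma runs_nseq (Y : letter) n : runs (nseq n.+1 Y) = [:: (Y, n.+1)].
Proof.
elim: n => [|n IH]; first by rewrite /= runs_cons runs_nil.
by rewrite [nseq _ _]/= runs_cons IH eqxx.
Qed.

Lemma spec_const Y n (s : sequence n.+1) : (forall i, s i = Y) ->
  spectrum s = if Y is A then [:: n.+1; 0] else [:: 0; n.+1].
Proof.
move=> H; rewrite /spectrum.
have -> : map s (enum 'I_n.+1) = nseq n.+1 Y.
  apply: (@eq_from_nth _ A); first by rewrite size_map size_enum_ord size_nseq.
  move=> i; rewrite size_map size_enum_ord => Hi.
  by rewrite (nth_map (Ordinal Hi)) ?size_enum_ord // H nth_nseq Hi.
rewrite /spectrum_list runs_nseq.
have -> : nseq n.+1 Y = Y :: nseq n Y by [].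
have -> : last Y (nseq n Y) = Y by clear H s; elim: n.
by case: Y H.
Qed.

Lemma noX_vals X n (s : sequence n.+1) : mm X s 0 = 0 ->
  [/\ mm X s 1 = n.+1, mm X s 2 = 0 & forall j, mm X s j.+3 = 0].
Proof.
move=> H0; have Hl := noX_letters H0.
have Hs := spec_const Hl.
have E1 : mm X s 1 = n.+1 /\ mm X s 2 = 0.
  rewrite /mm /= /I1 /m1 /idx /e_ /sig Hs.
  by case: X {H0 Hl Hs} => /=; rewrite !unlock /= ?addn0 ?add0n ?maxn0 eqxx /= ?unlock.
case: E1 => E1 E2; split => //.
elim => [|j IH].
  by rewrite mmS (mm_zero E2) big_nil.
by rewrite mmS (mm_zero IH) big_nil.
Qed.

Lemma Ssum_mono p j k : j <= k -> Ssum p j <= Ssum p k.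
Proof.
move=> H; elim: k H => [|k IH]; first by rewrite leqn0 => /eqP ->.
rewrite leq_eqVlt => /orP [/eqP -> //|H]; rewrite SsumS.
exact: leq_trans (IH H) (leq_addr _ _).
Qed.

Lemma upper X m (s : sequence m) (sigma : 'S_m) p k :
  inT sigma -> Blocks X (Defs.act sigma s) p k.+1 ->
  (forall j, j < k -> p j = mm X s j) -> p k <= mm X s k.
Proof.
move=> [t [Ht0 Hdec Hinc]] HB Heq.
case: (posnP (p 0)) => Hp0; last first.
  exact: (upper_main Ht0 Hdec Hinc HB Hp0 Heq).
case: k HB Heq => [|k] HB Heq; first by rewrite Hp0.
have H0 : mm X s 0 = 0 by rewrite -Heq.
case: m s sigma t Ht0 Hdec Hinc HB Heq H0 => [|n] s sigma t; first by case: t.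
move=> Ht0 Hdec Hinc HB Heq H0.
have [V1 V2 V3] := noX_vals H0.
case: k HB Heq => [|k] HB Heq.
  rewrite V1; have [HR _] := HB 1 (ltnSn _); exact: leq_trans (leq_addl _ _) HR.
have HS : n.+1 <= Ssum p k.+2.
  apply: leq_trans (Ssum_mono p (_ : 2 <= k.+2)) => //.
  by rewrite -V1 -Heq // SsumS leq_addl.
have [HR _] := HB k.+2 (ltnSn _).
have : p k.+2 = 0 by move: HR HS; lia.
by move=> ->.
Qed.

Lemma keylt (M p1 p2 o1 o2 : nat) : o1 < M -> p1 < p2 -> p1 * M + o1 < p2 * M + o2.
Proof.
move=> H1 H2; apply: leq_trans (_ : p1.+1 * M <= _).
  by rewrite mulSn addnC ltn_add2r.
exact: leq_trans (leq_mul H2 (leqnn M)) (leq_addr _ _).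
Qed.

Lemma letter_eqA (x y : letter) : (x == A) = (y == A) -> x = y.
Proof. by case: x; case: y. Qed.

Section Construct.
Variables (X : letter) (m : nat) (s : sequence m) (l : nat).
Hypothesis Hl : 0 < sig s l.
Hypothesis Hc : cand X s l.

Definition Pt := fun n => (n < m) && (rho s n == l).
Lemma Pt_ex : exists n, Pt n.
Proof. by have [i Hi] := sig_posP Hl; exists i; rewrite /Pt ltn_ord Hi eqxx. Qed.

Definition tn := ex_minn Pt_ex.
Lemma tn_spec : tn < m /\ rho s tn = l /\ forall n, n < m -> rho s n = l -> tn <= n.
Proof.
rewrite /tn; case: ex_minnP => n /andP [H1 /eqP H2] H3; split => //; split => // k Hk Hk2.
by apply: H3; rewrite /Pt Hk Hk2 eqxx.
Qed.

Definition t0 : 'I_m := Ordinal (proj1 tn_spec).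
Lemma rho_t0 : rho s t0 = l.
Proof. by have [_ [H _]] := tn_spec. Qed.
Lemma t0_min (i : 'I_m) : rho s i = l -> t0 <= i.
Proof. by have [_ [_ H]] := tn_spec; apply: H. Qed.
Lemma left_lt (i : 'I_m) : i < t0 -> rho s i < l.
Proof.
move=> H; have H1 : rho s i <= l by rewrite -rho_t0; apply: rho_monoI; exact: ltnW.
rewrite ltn_neqAle H1 andbT; apply/eqP => E; have := t0_min E; by rewrite leqNgt H.
Qed.
Lemma right_ge (i : 'I_m) : t0 <= i -> l <= rho s i.
Proof. by move=> H; rewrite -rho_t0; apply: rho_monoI. Qed.

Definition ph (i : 'I_m) := (rho s i - l) + (l - rho s i).
Definition off (i : 'I_m) := if i < t0 then m.-1 - i else m + i.
Definition key (i : 'I_m) := ph i * (2 * m) + off i.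

Lemma off_lt i : off i < 2 * m.
Proof. rewrite /off; case: ifP => _; have := ltn_ord i; lia. Qed.

Lemma key_lt_ph i j : ph i < ph j -> key i < key j.
Proof. by move=> H; apply: keylt => //; exact: off_lt. Qed.

Lemma key_inj : injective key.
Proof.
move=> i j E.
have Ep : ph i = ph j.
  case: (ltngtP (ph i) (ph j)) => // H.
    by have := key_lt_ph H; rewrite E ltnn.
  by have := key_lt_ph H; rewrite E ltnn.
move: E; rewrite /key Ep => /addnI; rewrite /off.
have Hi := ltn_ord i; have Hj := ltn_ord j.
case: ifP => Hit; case: ifP => Hjt => E; apply: val_inj => /=; move: E Hit Hjt; lia.
Qed.

Definition rank (i : 'I_m) := #|[set j : 'I_m | key j < key i]|.

Lemma rank_lt i : rank i < m.
Proof.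
rewrite /rank; have : [set j : 'I_m | key j < key i] \subset [set~ i].
  by apply/subsetP => j; rewrite !inE; apply: contraTneq => ->; rewrite ltnn.
move=> /subset_leq_card; rewrite cardsC1 card_ord => H.
by apply: leq_ltn_trans H _; case: m i => [[]|].
Qed.

Lemma rank_mono i j : key i < key j -> rank i < rank j.
Proof.
move=> H; apply: proper_card; rewrite properE; apply/andP; split.
  apply/subsetP => x; rewrite !inE => Hx; exact: ltn_trans Hx H.
apply/subsetPn; exists i; by rewrite !inE ?ltnn.
Qed.

Definition rankO (i : 'I_m) : 'I_m := Ordinal (rank_lt i).
Lemma rankO_inj : injective rankO.
Proof.
move=> i j /(congr1 val) /= E; apply: key_inj.
case: (ltngtP (key i) (key j)) => // H.
  by have := rank_mono H; rewrite E ltnn.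
by have := rank_mono H; rewrite E ltnn.
Qed.

Definition sig0 : 'S_m := perm rankO_inj.
Lemma sig0E i : nat_of_ord (sig0 i) = rank i.
Proof. by rewrite /sig0 permE. Qed.

Lemma ph_t0 : ph t0 = 0.
Proof. by rewrite /ph rho_t0 subnn. Qed.

Lemma sig0_t0 : nat_of_ord (sig0 t0) = 0.
Proof.
rewrite sig0E /rank; apply/eqP; rewrite cards_eq0; apply/eqP/setP => j; rewrite !inE.
apply/negbTE; rewrite -leqNgt.
case: (posnP (ph j)) => Hj.
  have Ej : rho s j = l by move: Hj; rewrite /ph; have := right_ge; lia.
  have Htj := t0_min Ej.
  by rewrite /key Hj ph_t0 /off ltnn !mul0n !add0n ltnNge Htj /= leq_add2l.
apply: ltnW; apply: key_lt_ph; by rewrite ph_t0.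
Qed.

Lemma sig0_dec (i j : 'I_m) : i < j -> j <= t0 -> sig0 j < sig0 i.
Proof.
move=> Hij Hjt; rewrite !sig0E; apply: rank_mono.
have Hi := left_lt (leq_trans Hij Hjt).
have Hmono := rho_monoI s (ltnW Hij).
move: Hjt; rewrite leq_eqVlt => /orP [/eqP Ejt|Hjt].
  have -> : j = t0 by apply: val_inj.
  apply: (leq_ltn_trans (leqnn _)); apply: key_lt_ph; rewrite ph_t0 /ph; lia.
have Hj := left_lt Hjt.
case: (ltngtP (ph j) (ph i)) => H; first exact: key_lt_ph.
  by move: H; rewrite /ph; lia.
rewrite /key H ltn_add2l /off Hjt (ltn_trans Hij Hjt).
have := ltn_ord j; lia.
Qed.

Lemma sig0_inc (i j : 'I_m) : t0 <= i -> i < j -> sig0 i < sig0 j.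
Proof.
move=> Hti Hij; rewrite !sig0E; apply: rank_mono.
have Hi := right_ge Hti.
have Hmono := rho_monoI s (ltnW Hij).
case: (ltngtP (ph i) (ph j)) => H; first exact: key_lt_ph.
  by move: H; rewrite /ph; lia.
rewrite /key H ltn_add2l /off !ltnNge Hti (leq_trans Hti (ltnW Hij)) /= -ltnNge ltn_add2l.
exact: Hij.
Qed.

Lemma sig0_inT : inT sig0.
Proof. exists t0; split; [exact: sig0_t0 | exact: sig0_dec | exact: sig0_inc]. Qed.

End Construct.

Section Construct2.
Variables (X : letter) (m : nat) (s : sequence m) (l : nat).
Hypothesis Hl : 0 < sig s l.
Hypothesis Hc : cand X s l.

Let t := t0 Hl.
Let sg := sig0 Hl Hc.

Lemma ph_phase i : ph s l i = phase s t i.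
Proof. by rewrite /ph /phase rho_t0. Qed.

Lemma PHc j : #|[set i : 'I_m | ph s l i == j]| = e_ s l j.
Proof.
rewrite -(rho_t0 Hl) -(PH_card s (sigma := sg) (sig0_t0 Hl Hc) j).
by apply: eq_card => i; rewrite !inE.
Qed.

Lemma Dc j : #|[set i : 'I_m | ph s l i < j]| = Ssum (e_ s l) j.
Proof.
elim: j => [|j IH].
  by rewrite /Ssum big_ord0; apply/eqP; rewrite cards_eq0; apply/eqP/setP => i; rewrite !inE.
rewrite SsumS -IH -PHc -cardsUI.
have -> : [set i : 'I_m | ph s l i < j] :&: [set i | ph s l i == j] = set0.
  by apply/setP => i; rewrite !inE; apply/negP => /andP [H /eqP E]; move: H; rewrite E ltnn.
rewrite cards0 addn0; apply: eq_card => i; rewrite !inE; lia.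
Qed.

Lemma rank_bounds i : Ssum (e_ s l) (ph s l i) <= sg i < Ssum (e_ s l) (ph s l i).+1.
Proof.
rewrite sig0E -!Dc /rank; apply/andP; split.
  apply: subset_leq_card; apply/subsetP => j; rewrite !inE => H.
  exact: (key_lt_ph Hl Hc H).
apply: proper_card; rewrite properE; apply/andP; split.
  apply/subsetP => j; rewrite !inE => H; rewrite ltnS leqNgt; apply/negP => H2.
  by have := key_lt_ph Hl Hc H2; rewrite ltnNge (ltnW H).
apply/subsetPn; exists i; by rewrite !inE ?ltnn.
Qed.

Lemma letter_ph (i : 'I_m) : s i = Yl X (ph s l i).
Proof.
apply: letter_eqA; rewrite -snE -rho_odd //.
have Hp : odd l = (X == A) by case/andP: Hc => _ /eqP ->; case: X.
have : odd (rho s i) = odd l (+) odd (ph s l i).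
  rewrite /ph; case: (leqP l (rho s i)) => H.
    have -> : rho s i = l + (rho s i - l) by rewrite subnKC.
    by rewrite oddD addKn (_ : l - (l + (rho s i - l)) = 0) ?addn0 //; lia.
  have E : l = rho s i + (l - rho s i) by rewrite subnKC // ltnW.
  rewrite (_ : rho s i - l = 0) ?add0n; last by lia.
  by rewrite {1}E oddD addbK.
rewrite Hp => ->; rewrite /Yl; case: X {Hp}; by case: (odd _).
Qed.

Lemma sig0_blocks K : Blocks X (Defs.act sg s) (e_ s l) K.
Proof.
move=> j _; split.
  by rewrite -SsumS -Dc; apply: leq_trans (max_card _) _; rewrite card_ord.
move=> q Hq.
have Eq : sg ((sg^-1)%g q) = q by rewrite permKV.
rewrite -Eq act_sigma.
set i := (sg^-1)%g q.
have Hph : ph s l i = j.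
  have := rank_bounds i; rewrite -/i Eq => /andP [H1 H2].
  move: Hq; rewrite -SsumS => /andP [H3 H4].
  case: (ltngtP (ph s l i) j) => // H.
    have := Ssum_mono (e_ s l) H; move: H2 H3; lia.
  have := Ssum_mono (e_ s l) H; rewrite SsumS; move: H1 H4; rewrite SsumS; lia.
by rewrite letter_ph Hph.
Qed.

End Construct2.

Lemma achieve X m (s : sequence m) : 0 < m ->
  exists2 sigma, inT sigma & forall K, Blocks X (Defs.act sigma s) (fun j => mm X s j) K.
Proof.
case: (posnP (mm X s 0)) => H0 Hm; last first.
  have Hp : forall l, cand X s l -> 0 < sig s l -> persist s l.
    by move=> l _ Hl; apply: persist_of.
  have [l Hl0 Hle] := gss H0 Hp.
  have [Hc Hv] := II_vals Hl0.
  have Hsl : 0 < sig s l by have := Hv 0 (leqnn 0); rewrite /= => ->.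
  exists (sig0 Hsl Hc); first exact: sig0_inT.
  move=> K j Hj; have [H1 H2] := sig0_blocks Hsl Hc Hj.
  have ES : forall j, Ssum (fun j => mm X s j) j = Ssum (e_ s l) j.
    by move=> j'; apply: eq_bigr => i _; rewrite Hle.
  by rewrite ES -Hle; split.
case: m s Hm H0 => [|n] // s _ H0.
have [V1 V2 V3] := noX_vals H0.
have Hl := noX_letters H0.
exists 1%g.
  exists ord0; split.
  - by rewrite perm1.
  - by move=> i j Hij; rewrite leqn0 => /eqP Hj; move: Hij; rewrite Hj.
  - by move=> i j _ Hij; rewrite !perm1.
have ES : forall j, 2 <= j -> Ssum (fun j => mm X s j) j = n.+1.
  elim => [|j IH] // Hj.
  rewrite SsumS.
  case: j IH Hj => [|[|j]] IH Hj //.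
    by rewrite SsumS /Ssum big_ord0 H0 V1.
  by rewrite IH //; case: j {IH Hj} => [|j]; rewrite ?V2 ?V3 addn0.
move=> K [|[|j]] Hj; split.
- by rewrite /Ssum big_ord0 H0.
- by move=> q; rewrite /Ssum big_ord0 H0.
- by rewrite SsumS /Ssum big_ord0 H0 V1.
- move=> q _; rewrite /Defs.act invg1 perm1 Hl /Yl /=; by [].
- by rewrite ES // ; case: j {Hj} => [|j]; rewrite ?V2 ?V3 addn0.
- move=> q; rewrite ES //; case: j {Hj} => [|j]; rewrite ?V2 ?V3 addn0 => /andP [H1 H2];
    move: H1 H2; lia.
Qed.

Lemma blocks_eq X m (u u' : sequence m) p K : u =1 u' -> Blocks X u p K -> Blocks X u' p K.
Proof.
move=> E HB j Hj; have [H1 H2] := HB j Hj; split => // i Hi; by rewrite -E H2.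
Qed.

Lemma mI_spec X m (s s' : sequence m) : spectrum s = spectrum s' ->
  forall k, mI X s k = mI X s' k.
Proof.
move=> H; elim => [|k IH].
  by rewrite /mI /I1 /m1 /idx /sig H.
by rewrite [mI X s k.+1]/= [mI X s' k.+1]/= IH /e_ /sig H.
Qed.

Lemma mirrored_mm X m (s s' : sequence m) : mirrored s s' -> forall k, mm X s k = mm X s' k.
Proof.
move=> [Hm1 Hm2].
case: (posnP m) => Hm.
  move=> k; rewrite /mm (@mI_spec X m s s') //.
  rewrite /spectrum; congr spectrum_list.
  have E : enum 'I_m = [::] by apply/eqP; rewrite -size_eq0 size_enum_ord Hm.
  by rewrite E.
elim/ltn_ind => k IH.
apply/eqP; rewrite eqn_leq; apply/andP; split.
  have [sig Hsig HB] := achieve X s Hm.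
  have [sig' Hsig' E] := Hm1 sig Hsig.
  apply: (upper (p := fun j => mm X s j) Hsig').
    exact: blocks_eq E (HB k.+1).
  by move=> j Hj; apply: IH.
have [sig' Hsig' HB] := achieve X s' Hm.
have [sig Hsig E] := Hm2 sig' Hsig'.
apply: (upper (p := fun j => mm X s' j) Hsig).
  exact: blocks_eq E (HB k.+1).
by move=> j Hj; rewrite IH.
Qed.

Theorem mainTheorem15 (m : nat) (s s' : sequence m) :
  ((exists i : nat, 1 <= i /\ mX A s i <> mX A s' i) -> ~ mirrored s s') /\
  ((exists i : nat, 1 <= i /\ mX B s i <> mX B s' i) -> ~ mirrored s s').
Proof.
split => [[i [_ Hi]] Hm | [i [_ Hi]] Hm]; apply: Hi; exact: (mirrored_mm _ Hm).
Qed.
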